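(* Let $s\ge1$ and let $\mathcal{G}_{2s}\subset GL_{2s}(\mathbb{Z})$ be the group generated by the linear maps $\sigma_1,\dotsc,\sigma_{2s}$ of $\mathbb{Z}^{2s}$ given in coordinates $k=(k_1,\dotsc,k_{2s})$ by \[ \sigma_1:\ k_1\mapsto k_1,\quad k_j\mapsto k_j+k_1\ (j>1); \] \[ \sigma_i\ (2\le i\le 2s):\ k_{i-1}\mapsto 2k_{i-1}-k_i,\quad k_i\mapsto k_{i-1},\quad k_j\mapsto k_j\ (j\ne i-1,i). \] For a nonzero $k\in\mathbb{Z}^{2s}$ put $\gamma=\gcd(k_1,\dotsc,k_{2s})$, $\alpha=\#\{i:\ k_i/\gamma\equiv1\pmod 2\}$ and $\delta=|2\alpha-2s-1|$. Then $\delta$ (and $\gamma$) are invariant under the action of $\mathcal{G}_{2s}$: for every $g\in\mathcal{G}_{2s}$ and every nonzero $k$, the vectors $k$ and $gk$ have the same value of $\delta$. *)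

(* Defs.v *)
From mathcomp Require Import all_boot all_order all_algebra.
Set Implicit Arguments. Unset Strict Implicit. Unset Printing Implicit Defensive.
Import Order.TTheory GRing.Theory Num.Theory.
Local Open Scope ring_scope.

(* Vectors k in Z^n are column vectors 'cV[int]_n; coordinate k_j (1-based in
   the paper) is k (j-1) 0 here.  Linear maps are integer matrices acting by
   left multiplication. *)

(* The generator sigma_i (1-based index i, 1 <= i <= n) as an n x n matrix. *)
Definition sigma (n i : nat) : 'M[int]_n :=
  \matrix_(j < n, l < n)
    if i == 1%N then
      (((j == l) : nat) + (((j : nat) != 0%N) && ((l : nat) == 0%N) : nat))%:Z
    else if (j : nat) == (i - 2)%N then
      (if (l : nat) == (i - 2)%N then 2 else if (l : nat) == (i - 1)%N then -1 else 0)
    else if (j : nat) == (i - 1)%N then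
      ((l == (i - 2)%N :> nat) : nat)%:Z
    else ((j == l) : nat)%:Z.

Inductive inG (n : nat) : 'M[int]_n -> Prop :=
| inG1 : inG 1%:M
| inG_mul (i : nat) (g : 'M[int]_n) :
    (1 <= i <= n)%N -> inG g -> inG (sigma n i *m g)
| inG_mulV (i : nat) (g : 'M[int]_n) :
    (1 <= i <= n)%N -> inG g -> inG (invmx (sigma n i) *m g).

Definition gammaV (n : nat) (k : 'cV[int]_n) : int :=
  \big[gcdz/0]_(j < n) k j ord0.

Definition alphaV (n : nat) (k : 'cV[int]_n) : nat :=
  #|[set j : 'I_n | modz (divz (k j ord0) (gammaV k)) 2 == 1]|.

Definition deltaV (n : nat) (k : 'cV[int]_n) : nat :=
  absz ((2 * (alphaV k)%:Z - n%:Z - 1)%R).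

(* Main.v *)
Require Import Defs.
From mathcomp Require Import all_boot all_order all_algebra.
From mathcomp Require Import zify ring lra.
Import Order.TTheory GRing.Theory Num.Theory.
Set Implicit Arguments. Unset Strict Implicit.
Local Open Scope ring_scope.

Definition par (x : int) : bool := (x %% 2)%Z == 1.

Lemma mod2_cases (x : int) : (x %% 2)%Z = 0 \/ (x %% 2)%Z = 1.
Proof.
have h1 := modz_ge0 x (isT : (2:int) != 0).
have h2 := ltz_mod x (isT : (2:int) != 0).
lia.
Qed.

Lemma parD x y : par (x + y) = par x (+) par y.
Proof.
rewrite /par -modzDm.
by case: (mod2_cases x) => ->; case: (mod2_cases y) => ->.
Qed.

Lemma par0 : par 0 = false. Proof. by []. Qed.

Lemma parN x : par (- x) = par x.
Proof.
have := parD x (- x); rewrite subrr par0.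
by case: (par x); case: (par (-x)).
Qed.

Lemma par2 x : par (2 * x) = false.
Proof. by rewrite /par mulrC modzMl. Qed.

Lemma gamma_dvd n (k : 'cV[int]_n) d :
  (d %| gammaV k)%Z = [forall j, (d %| k j ord0)%Z].
Proof.
rewrite /gammaV (big_morph (fun x => (d %| x)%Z) (dvdz_gcd d) (dvdz0 d)).
by rewrite big_andE.
Qed.

Lemma gamma_ge0 n (k : 'cV[int]_n) : 0 <= gammaV k.
Proof. rewrite /gammaV; elim/big_rec: _ => // i x _ _; exact: le0z_nat. Qed.

Lemma gamma_eq n (k k' : 'cV[int]_n) :
  (forall d, (forall j, (d %| k j ord0)%Z) -> forall j, (d %| k' j ord0)%Z) ->
  (forall d, (forall j, (d %| k' j ord0)%Z) -> forall j, (d %| k j ord0)%Z) ->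
  gammaV k' = gammaV k.
Proof.
move=> H1 H2.
have d1 : (gammaV k %| gammaV k')%Z.
  rewrite gamma_dvd; apply/forallP; apply: H1 => j.
  by move: (dvdzz (gammaV k)); rewrite gamma_dvd => /forallP.
have d2 : (gammaV k' %| gammaV k)%Z.
  rewrite gamma_dvd; apply/forallP; apply: H2 => j.
  by move: (dvdzz (gammaV k')); rewrite gamma_dvd => /forallP.
have g1 := gamma_ge0 k; have g2 := gamma_ge0 k'.
move: d1 d2; rewrite /dvdz => d1 d2.
have e : `|gammaV k'|%N = `|gammaV k|%N by apply/eqP; rewrite eqn_dvd; apply/andP; split; [exact: d2 | exact: d1].
by rewrite -(gez0_abs g1) -(gez0_abs g2) e.
Qed.

Lemma sum_ind n (l0 : 'I_n) (F : 'I_n -> int) :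
  \sum_(l < n) ((l == l0) : nat)%:Z * F l = F l0.
Proof.
rewrite (bigD1 l0) //= eqxx mul1r big1 ?addr0 // => l /negbTE ->.
by rewrite mul0r.
Qed.

Lemma sigma1_act n (h0 : (0 < n)%N) (c : 'cV[int]_n) j :
  (sigma n 1 *m c) j ord0 =
  c j ord0 + (if (j:nat) == 0%N then 0 else c (Ordinal h0) ord0).
Proof.
rewrite mxE /sigma.
under eq_bigr => l _ do rewrite mxE /= PoszD mulrDl.
rewrite big_split /=.
under eq_bigr => l _ do rewrite eq_sym.
rewrite sum_ind; congr (_ + _).
case: eqP => [_|/eqP j0].
  by rewrite big1 // => l _; rewrite mul0r.
simpl.
exact: (sum_ind (Ordinal h0)).
Qed.

Lemma sigmaI_act n i (a b : 'I_n) (ha : (a:nat) = (i-2)%N)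
  (hb : (b:nat) = (i-1)%N) (hi : (2 <= i)%N) (c : 'cV[int]_n) j :
  (sigma n i *m c) j ord0 =
  if j == a then 2 * c a ord0 - c b ord0
  else if j == b then c a ord0 else c j ord0.
Proof.
have hi1 : (i == 1%N) = false by case: i hi {ha hb} => [|[|]].
have ab : (a == b) = false.
  apply/negbTE; rewrite -val_eqE /= ha hb; apply/eqP; lia.
rewrite mxE /sigma.
under eq_bigr => l _ do rewrite mxE hi1 -ha -hb.
case: (eqVneq j a) => [->|ja].
  rewrite eqxx (bigD1 a) //= eqxx (bigD1 b) /=; last by rewrite eq_sym ab.
  have -> : ((b:nat) == a) = false by rewrite eq_sym; exact: ab.
  rewrite eqxx big1 ?addr0; last first.
    move=> l /andP [lb la].
    have -> : ((l:nat) == a) = false by apply/negbTE.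
    have -> : ((l:nat) == b) = false by apply/negbTE.
    by rewrite mul0r.
  by rewrite mulN1r.
have -> : ((j:nat) == a) = false by apply/negbTE.
case: (eqVneq j b) => [->|jb].
  rewrite eqxx.
  exact: (sum_ind a).
have -> : ((j:nat) == b) = false by apply/negbTE.
under eq_bigr => l _ do rewrite eq_sym.
exact: (sum_ind j).
Qed.

Lemma count1 n (h0 : (0 < n)%N) (c : 'cV[int]_n) :
  let S := [set j | par (c j ord0)] in
  let S' := [set j | par ((sigma n 1 *m c) j ord0)] in
  if par (c (Ordinal h0) ord0) then (#|S'| + #|S| = n.+1)%N else #|S'| = #|S|.
Proof.
move=> S S'.
have E : forall j, par ((sigma n 1 *m c) j ord0) =
   par (c j ord0) (+) ((j != Ordinal h0) && par (c (Ordinal h0) ord0)).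
  move=> j; rewrite sigma1_act parD; congr (_ (+) _).
  have -> : ((j:nat) == 0%N) = (j == Ordinal h0) by [].
  by case: (j == Ordinal h0).
case: ifP => hp.
  rewrite -cardsUI.
  have -> : S' :|: S = setT.
    apply/setP => j; rewrite !inE E hp andbT.
    by case: (eqVneq j (Ordinal h0)) => [->|_]; rewrite ?hp //=; case: (par _).
  have -> : S' :&: S = [set Ordinal h0].
    apply/setP => j; rewrite !inE E hp andbT.
    case: (eqVneq j (Ordinal h0)) => [->|_] /=; first by rewrite hp.
    by case: (par (c j ord0)).
  by rewrite cards1 cardsT card_ord addn1.
apply: eq_card => j; rewrite !inE E hp andbF.
by case: (par (c j ord0)).
Qed.

Definition swp n (a b : 'I_n) (j : 'I_n) := if j == a then b else if j == b then a else j.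

Lemma swpK n (a b : 'I_n) : involutive (swp a b).
Proof.
move=> j; rewrite /swp.
case: (eqVneq j a) => [->|ja].
  case: (eqVneq b a) => [->|ba]; first by rewrite ?eqxx.
  by rewrite eqxx.
case: (eqVneq j b) => [->|jb]; first by rewrite eqxx.
by rewrite (negbTE ja) (negbTE jb).
Qed.

Lemma countI n i (a b : 'I_n) (ha : (a:nat) = (i-2)%N)
  (hb : (b:nat) = (i-1)%N) (hi : (2 <= i)%N) (c : 'cV[int]_n) :
  #|[set j | par ((sigma n i *m c) j ord0)]| = #|[set j | par (c j ord0)]|.
Proof.
have ba : (b == a) = false.
  apply/negbTE; rewrite -val_eqE /= ha hb; apply/eqP; lia.
rewrite -(card_preimset _ (can_inj (swpK a b))).
apply: eq_card => j; rewrite !inE (sigmaI_act ha hb hi) /swp.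
case: (eqVneq j a) => [->|ja]; first by rewrite eqxx ba.
case: (eqVneq j b) => [->|jb]; first by rewrite eqxx parD parN par2.
by rewrite (negbTE ja) (negbTE jb).
Qed.

Lemma sigma_gamma n i (hi : (1 <= i <= n)%N) (k : 'cV[int]_n) :
  gammaV (sigma n i *m k) = gammaV k.
Proof.
have h0 : (0 < n)%N by lia.
case: (eqVneq i 1%N) => [->|i1].
  apply: gamma_eq => d H j.
    rewrite sigma1_act; apply: rpredD => //; case: ifP => _ //; exact: dvdz0.
  have e : k j ord0 = (sigma n 1 *m k) j ord0 -
      (if (j:nat) == 0%N then 0 else (sigma n 1 *m k) (Ordinal h0) ord0).
    rewrite !sigma1_act /=; case: ifP => _; rewrite ?subr0 ?addr0 ?addrK //.
  rewrite e; apply: rpredB => //; case: ifP => _ //; exact: dvdz0.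
have hi2 : (2 <= i)%N by lia.
have ha : (i - 2 < n)%N by lia.
have hb : (i - 1 < n)%N by lia.
pose a := Ordinal ha; pose b := Ordinal hb.
have E := sigmaI_act (a := a) (b := b) (erefl _) (erefl _) hi2.
apply: gamma_eq => d H j.
  rewrite E; case: ifP => _; last case: ifP => _ //.
  by apply: rpredB => //; apply: dvdz_mull.
have Ea := E k a; have Eb := E k b.
rewrite eqxx in Ea.
have ab : (b == a) = false.
  by apply/negbTE; rewrite -val_eqE /=; apply/eqP; lia.
rewrite ab eqxx in Eb.
case: (eqVneq j a) => [->|ja].
  by rewrite -Eb.
case: (eqVneq j b) => [->|jb].
  have -> : k b ord0 = 2 * (sigma n i *m k) b ord0 - (sigma n i *m k) a ord0.
    by rewrite Ea Eb; ring.
  by apply: rpredB => //; apply: dvdz_mull.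
have := E k j; rewrite (negbTE ja) (negbTE jb) => <-; exact: H.
Qed.

Lemma sigma_delta n i (hi : (1 <= i <= n)%N) (k : 'cV[int]_n) :
  deltaV (sigma n i *m k) = deltaV k.
Proof.
have g := sigma_gamma hi k.
have h0 : (0 < n)%N by lia.
rewrite /deltaV.
case: (eqVneq (gammaV k) 0) => g0.
  suff -> : alphaV (sigma n i *m k) = alphaV k by [].
  rewrite /alphaV g g0.
  by apply: eq_card => j; rewrite !inE !divz0.
pose c : 'cV[int]_n := \col_j (k j ord0 %/ gammaV k)%Z.
have kc : k = gammaV k *: c.
  apply/matrixP => j l; rewrite !mxE (ord1 l) mulrC divzK //.
  by move: (dvdzz (gammaV k)); rewrite gamma_dvd => /forallP.
have A1 : alphaV k = #|[set j | par (c j ord0)]|.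
  by rewrite /alphaV; apply: eq_card => j; rewrite !inE mxE.
have A2 : alphaV (sigma n i *m k) = #|[set j | par ((sigma n i *m c) j ord0)]|.
  rewrite /alphaV g; apply: eq_card => j; rewrite !inE.
  by rewrite {1}kc -scalemxAr mxE mulKz.
rewrite A1 A2.
case: (eqVneq i 1%N) => [->|i1].
  have e1 := count1 h0 c; cbv zeta in e1; move: e1; case: (par _) => e; last by rewrite e.
  lia.
have hi2 : (2 <= i)%N by lia.
have ha : (i - 2 < n)%N by lia.
have hb : (i - 1 < n)%N by lia.
by rewrite (countI (a := Ordinal ha) (b := Ordinal hb) (erefl _) (erefl _) hi2).
Qed.

Lemma main_aux n (g : 'M[int]_n) (hg : inG g) (k : 'cV[int]_n) :
  deltaV (g *m k) = deltaV k /\ gammaV (g *m k) = gammaV k.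
Proof.
elim: hg k => [|i g' hi _ IH|i g' hi _ IH] k.
- by rewrite mul1mx.
- by rewrite -mulmxA sigma_delta // sigma_gamma //; apply: IH.
- case: (boolP (sigma n i \in unitmx)) => u; last first.
    by rewrite invmx_out ?inE // -mulmxA sigma_delta // sigma_gamma //; apply: IH.
  rewrite -mulmxA.
  have e : sigma n i *m (invmx (sigma n i) *m (g' *m k)) = g' *m k.
    by rewrite mulKVmx.
  have := sigma_delta hi (invmx (sigma n i) *m (g' *m k)).
  have := sigma_gamma hi (invmx (sigma n i) *m (g' *m k)).
  rewrite e => <- <-; exact: IH.
Qed.

Theorem mainTheorem4 (s : nat) (hs : (1 <= s)%N)
    (g : 'M[int]_(2 * s)) (hg : inG g) (k : 'cV[int]_(2 * s)) (hk : k != 0) :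
  deltaV (g *m k) = deltaV k /\ gammaV (g *m k) = gammaV k.
Proof. exact: main_aux. Qed.
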